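(* Let $\alpha>2$, $P>0$ and $N\ge 0$. Let $V'$ be a finite set of points (nodes) in the Euclidean plane and let $v$ be a point with $v\notin V'$. Suppose that there are reals $\rho_1,\rho_2$ such that (1) any two distinct nodes of $V'$ are at Euclidean distance at least $\rho_1$ from each other, (2) every node of $V'$ is at distance at least $\rho_2$ from $v$, and (3) $\rho_2 > \rho_1/2 > 0$. Then $$SP(V',v) \;<\; \frac{36(\alpha-1)}{\alpha-2}\,\frac{\rho_2^2}{\rho_1^2}\,\frac{P}{\rho_2^{\alpha}} + N .$$
   Context: Physical (SINR) model in the Euclidean plane: every transmitting node uses the same power $P$, the path-loss exponent is $\alpha>2$, and $N\ge 0$ is the background noise. For a set $V'$ of nodes that transmit simultaneously and a node $v\notin V'$, the sensed power strength at $v$ is $SP(V',v)=\sum_{u\in V'} \frac{P}{d(u,v)^{\alpha}} + N$, where $d(u,v)$ is the Euclidean distance between $u$ and $v$. *)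

(* Defs.v *)
From Stdlib Require Import Reals List.
Open Scope R_scope.

Definition point := (R * R)%type.

Definition edist (u v : point) : R :=
  sqrt ((fst u - fst v) ^ 2 + (snd u - snd v) ^ 2).

(* Sensed power strength at v of the (finite, duplicate-free) set Vs of
   simultaneously transmitting nodes, each with power P, path-loss exponent
   alpha (real), background noise N:
     SP(Vs, v) = sum_{u in Vs} P / d(u,v)^alpha + N. *)
Definition sensedPower (P alpha N : R) (Vs : list point) (v : point) : R :=
  fold_right (fun u acc => P / Rpower (edist u v) alpha + acc) 0 Vs + N.

(* Main.v *)
Require Import Defs.
From Stdlib Require Import Reals List Lra Lia Psatz ZArith Classical.
Open Scope R_scope.

Definition sumexp (al : R) (l : list R) : R :=
  fold_right (fun x acc => exp (- al * x) + acc) 0 l.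
Definition cntle (t : R) (l : list R) : nat :=
  length (filter (fun x => if Rle_dec x t then true else false) l).

Lemma sumexp_app al l1 l2 : sumexp al (l1 ++ l2) = sumexp al l1 + sumexp al l2.
Proof. induction l1; simpl; [lra|]. unfold sumexp in *; simpl. rewrite IHl1; lra. Qed.

Lemma cntle_app t l1 l2 : cntle t (l1 ++ l2) = (cntle t l1 + cntle t l2)%nat.
Proof. unfold cntle. rewrite filter_app, length_app. reflexivity. Qed.

Lemma cntle_cons t x l : cntle t (x :: l) = ((if Rle_dec x t then 1 else 0) + cntle t l)%nat.
Proof. unfold cntle; simpl. destruct (Rle_dec x t); reflexivity. Qed.

Lemma cntle_all t l : (forall x, In x l -> x <= t) -> cntle t l = length l.
Proof. induction l; simpl; intros H; auto. unfold cntle in *; simpl.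
  destruct (Rle_dec a t); [|exfalso; apply n; auto]. simpl. rewrite IHl; auto. Qed.

Lemma inner_ineq be d : 0 < be -> 0 <= d ->
  be * exp (- be * d) * (1 - exp (-2 * d)) <= 2 * (1 - exp (- be * d)).
Proof.
  intros Hb Hd.
  assert (H1 := exp_ineq1_le (be * d)).
  assert (H2 := exp_ineq1_le (-2 * d)).
  assert (HE : exp (- be * d) * exp (be * d) = 1).
  { rewrite <- exp_plus. replace (- be * d + be * d) with 0 by ring. apply exp_0. }
  assert (HEp := exp_pos (- be * d)).
  (* 1 - E = E (e^{bd} - 1) >= E be d *)
  assert (1 - exp (- be * d) >= exp (- be * d) * (be * d)).
  { nra. }
  assert (0 <= be * exp (- be * d)) by nra.
  assert (be * exp (- be * d) * (1 - exp (-2 * d)) <= be * exp (- be * d) * (2 * d)).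
  { apply Rmult_le_compat_l; lra. }
  nra.
Qed.

Section Abel.
Variables (al a b : R).
Hypothesis Hal : 2 < al.
Hypothesis Ha : 0 <= a.
Hypothesis Hb : 0 <= b.

Definition Psi (x : R) : R := a * al / (al - 2) * exp ((2 - al) * x) + b * exp (- al * x).

Lemma psi_step x y : 0 <= x -> x <= y ->
  (a * exp (2 * x) + b) * (exp (- al * x) - exp (- al * y)) <= Psi x - Psi y.
Proof.
  intros Hx Hxy. set (d := y - x). set (be := al - 2).
  assert (Hbe : 0 < be) by (unfold be; lra).
  assert (Hd : 0 <= d) by (unfold d; lra).
  set (c := exp ((2 - al) * x)). set (E := exp (- be * d)). set (F := exp (-2 * d)).
  set (q := exp (- al * x)).
  assert (e1 : exp (2 * x) * q = c).
  { unfold q, c. rewrite <- exp_plus. f_equal. ring. }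
  assert (e2 : exp (- al * y) = q * E * F).
  { unfold q, E, F. rewrite <- !exp_plus. f_equal. unfold d, be. ring. }
  assert (e3 : exp ((2 - al) * y) = c * E).
  { unfold c, E. rewrite <- exp_plus. f_equal. unfold d, be. ring. }
  unfold Psi. rewrite e2, e3. fold q c.
  assert (Hin := inner_ineq be d Hbe Hd). fold E F in Hin.
  assert (Hc : 0 < c) by apply exp_pos.
  assert (Hal2 : al = be + 2) by (unfold be; ring).
  assert (key : a * exp (2 * x) * (q - q * E * F) <= a * al / (al - 2) * (c - c * E)).
  { replace (a * exp (2 * x) * (q - q * E * F)) with (a * (c - c * E * F))
      by (rewrite <- e1; ring).
    fold be. rewrite Hal2.
    apply Rmult_le_compat_l with (r := a) in Hin; auto.
    assert (a * (be + 2) / be * (c - c * E) - a * (c - c * E * F)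
            = c / be * (a * (2 * (1 - E)) - a * (be * E * (1 - F)))) by (field; lra).
    assert (0 <= c / be * (a * (2 * (1 - E)) - a * (be * E * (1 - F)))).
    { apply Rmult_le_pos. apply Rlt_le, Rdiv_lt_0_compat; auto. nra. }
    lra. }
  nra.
Qed.

Lemma psi_ge y : 0 <= y -> (a * exp (2 * y) + b) * exp (- al * y) <= Psi y.
Proof.
  intros Hy. unfold Psi.
  assert (e1 : exp (2 * y) * exp (- al * y) = exp ((2 - al) * y)).
  { rewrite <- exp_plus. f_equal. ring. }
  assert (Hc := exp_pos ((2 - al) * y)).
  assert (1 <= al / (al - 2)).
  { apply (Rmult_le_reg_r (al - 2)); [lra|]. unfold Rdiv. rewrite Rmult_assoc, Rinv_l; lra. }
  assert (a * exp ((2 - al) * y) <= a * (al / (al - 2)) * exp ((2 - al) * y)).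
  { rewrite Rmult_assoc. apply Rmult_le_compat_l; auto. nra. }
  unfold Rdiv in *. nra.
Qed.

Lemma psi_dec x y : 0 <= x -> x <= y -> Psi y <= Psi x.
Proof.
  intros. assert (H1 := psi_step x y H H0).
  assert (exp (- al * y) <= exp (- al * x)).
  { destruct (Req_dec x y). subst; lra. apply Rlt_le, exp_increasing. nra. }
  assert (0 <= a * exp (2 * x) + b) by (assert (H3 := exp_pos (2*x)); nra).
  nra.
Qed.

Lemma exists_max (l : list R) : l <> nil -> exists m, In m l /\ forall x, In x l -> x <= m.
Proof.
  induction l as [|h t IH]; intros H; [congruence|].
  destruct t as [|h2 t2].
  - exists h. split; [left; auto|]. intros x [<-|[]]; lra.
  - destruct IH as [m [Hm Hmx]]; [discriminate|].
    destruct (Rle_dec h m).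
    + exists m. split; [right; auto|]. intros x [<-|Hx]; auto.
    + exists h. split; [left; auto|]. intros x [<-|Hx]; [lra|]. specialize (Hmx x Hx); lra.
Qed.

Lemma abel_gen n : forall l, (length l <= n)%nat ->
  (forall x, In x l -> 0 <= x) ->
  (forall t, 0 <= t -> INR (cntle t l) <= a * exp (2 * t) + b) ->
  forall T, 0 <= T -> (forall x, In x l -> x <= T) ->
  sumexp al l <= Psi 0 - Psi T + INR (length l) * exp (- al * T).
Proof.
  induction n as [|n IH]; intros l Hlen Hpos Hcnt T HT HlT.
  - destruct l; [|simpl in Hlen; lia]. simpl. assert (H := psi_dec 0 T (Rle_refl 0) HT). lra.
  - destruct l as [|h t].
    + simpl. assert (H := psi_dec 0 T (Rle_refl 0) HT). lra.
    + destruct (exists_max (h :: t)) as [m [Hm Hmx]]; [discriminate|].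
      destruct (in_split _ _ Hm) as [l1 [l2 Heq]]. rewrite Heq in *.
      set (rest := l1 ++ l2).
      assert (Hlr : length (l1 ++ m :: l2) = S (length rest)).
      { unfold rest. rewrite !length_app. simpl. lia. }
      assert (Hinr : forall x, In x rest -> In x (l1 ++ m :: l2)).
      { unfold rest; intros x Hx. apply in_app_or in Hx. apply in_or_app. simpl. tauto. }
      assert (Hm0 : 0 <= m) by auto.
      assert (IH' := IH rest).
      assert (Hs : sumexp al rest <= Psi 0 - Psi m + INR (length rest) * exp (- al * m)).
      { apply IH'; auto.
        - rewrite Hlr in Hlen; lia.
        - intros t0 Ht0. eapply Rle_trans; [|apply Hcnt; auto].
          apply le_INR. unfold rest. rewrite !cntle_app. rewrite cntle_cons.
          destruct (Rle_dec m t0); simpl; lia. }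
      assert (Hsplit : sumexp al (l1 ++ m :: l2) = sumexp al rest + exp (- al * m)).
      { unfold rest. rewrite !sumexp_app. simpl. unfold sumexp at 2. simpl. fold (sumexp al l2). lra. }
      rewrite Hsplit, Hlr, S_INR.
      assert (Hc : INR (S (length rest)) <= a * exp (2 * m) + b).
      { rewrite <- Hlr. rewrite <- (cntle_all m (l1 ++ m :: l2)); auto. }
      rewrite S_INR in Hc.
      assert (Hst := psi_step m T Hm0 (HlT m Hm)).
      assert (exp (- al * T) <= exp (- al * m)).
      { destruct (Req_dec m T). subst; lra. apply Rlt_le, exp_increasing.
        assert (m <= T) by auto. assert (m < T) by lra. nra. }
      nra.
Qed.

Lemma abel (l : list R) :
  (forall x, In x l -> 0 <= x) ->
  (forall t, 0 <= t -> INR (cntle t l) <= a * exp (2 * t) + b) ->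
  sumexp al l <= a * al / (al - 2) + b.
Proof.
  intros Hpos Hcnt.
  destruct l as [|h t].
  - simpl. assert (0 <= a * al / (al - 2)). { apply Rmult_le_pos. nra. apply Rlt_le, Rinv_0_lt_compat; lra. } lra.
  - destruct (exists_max (h :: t)) as [T [HT HTx]]; [discriminate|].
    assert (H := abel_gen (length (h :: t)) (h :: t) (le_n _) Hpos Hcnt T (Hpos T HT) HTx).
    rewrite <- (cntle_all T (h :: t) HTx) in H.
    assert (H2 := Hcnt T (Hpos T HT)).
    assert (H3 := psi_ge T (Hpos T HT)).
    assert (Psi 0 = a * al / (al - 2) + b).
    { unfold Psi. replace ((2 - al) * 0) with 0 by ring. replace (- al * 0) with 0 by ring. rewrite exp_0. ring. }
    assert (Hp := exp_pos (- al * T)).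
    nra.
Qed.
End Abel.

Lemma NoDup_map_inj {A B} (f : A -> B) (l : list A) : NoDup l ->
  (forall x y, In x l -> In y l -> f x = f y -> x = y) -> NoDup (map f l).
Proof.
  induction l as [|h t IH]; intros Hn Hi; simpl; constructor.
  - intros Hin. apply in_map_iff in Hin. destruct Hin as [x [Hx Hxt]].
    inversion Hn; subst. assert (x = h) by (apply Hi; simpl; auto). subst; contradiction.
  - inversion Hn; subst. apply IH; auto. intros; apply Hi; simpl; auto.
Qed.

Lemma floor_close a b : Int_part a = Int_part b -> (a - b) * (a - b) < 1.
Proof.
  intros H. destruct (base_Int_part a) as [a1 a2]. destruct (base_Int_part b) as [b1 b2].
  rewrite H in a1, a2. nra.
Qed.

Lemma edist_sq u w : edist u w * edist u w = (fst u - fst w) ^ 2 + (snd u - snd w) ^ 2.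
Proof. unfold edist. apply sqrt_sqrt. assert (H1:=pow2_ge_0 (fst u - fst w)); assert (H2:=pow2_ge_0 (snd u - snd w)); lra. Qed.

Lemma edist_nonneg u w : 0 <= edist u w.
Proof. unfold edist. apply sqrt_pos. Qed.

Definition rng (m : nat) : list Z :=
  map (fun k => (Z.of_nat k - Z.of_nat m)%Z) (seq 0 (2 * m + 1)).

Lemma rng_in m z : (- Z.of_nat m <= z <= Z.of_nat m)%Z -> In z (rng m).
Proof.
  intros H. unfold rng. apply in_map_iff. exists (Z.to_nat (z + Z.of_nat m)).
  split. rewrite Z2Nat.id; lia. apply in_seq. lia.
Qed.

Lemma rng_len m : length (rng m) = (2 * m + 1)%nat.
Proof. unfold rng. rewrite length_map, length_seq. reflexivity. Qed.

Section Geo.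
Variables (rho1 rho2 : R) (Vs : list point) (v : point).
Hypothesis Hnodup : NoDup Vs.
Hypothesis H1 : forall u w, In u Vs -> In w Vs -> u <> w -> rho1 <= edist u w.
Hypothesis H2 : forall u, In u Vs -> rho2 <= edist u v.
Hypothesis H3a : rho1 / 2 < rho2.
Hypothesis H3b : 0 < rho1 / 2.

Definition s := rho1 / sqrt 2.

Lemma s_pos : 0 < s.
Proof. unfold s. apply Rdiv_lt_0_compat. lra. apply sqrt_lt_R0; lra. Qed.

Lemma s_sq : s * s = rho1 * rho1 / 2.
Proof.
  unfold s. assert (H := sqrt_sqrt 2 ltac:(lra)). assert (0 < sqrt 2) by (apply sqrt_lt_R0; lra).
  replace (rho1 / sqrt 2 * (rho1 / sqrt 2)) with (rho1 * rho1 / (sqrt 2 * sqrt 2)) by (field; lra).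
  rewrite H. reflexivity.
Qed.

Definition cx (u : point) : Z := Int_part ((fst u - fst v) / s + / 2).
Definition cy (u : point) : Z := Int_part ((snd u - snd v) / s + / 2).
Definition cell (u : point) : Z * Z := (cx u, cy u).

Lemma coord_close (a b : R) : Int_part ((a) / s + / 2) = Int_part (b / s + / 2) ->
  (a - b) * (a - b) < s * s.
Proof.
  intros H. apply floor_close in H. assert (Hs := s_pos).
  replace (a / s + / 2 - (b / s + / 2)) with ((a - b) / s) in H by (field; lra).
  assert (((a - b) / s) * ((a - b) / s) * (s * s) = (a - b) * (a - b)) by (field; lra).
  assert (((a - b) / s) * ((a - b) / s) * (s * s) < 1 * (s * s)).
  { apply Rmult_lt_compat_r; [nra|exact H]. }
  lra.
Qed.

Lemma cell_inj u w : In u Vs -> In w Vs -> cell u = cell w -> u = w.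
Proof.
  intros Hu Hw Hc. unfold cell in Hc. injection Hc as Hx Hy.
  destruct (Classical_Prop.classic (u = w)) as [E|E]; auto.
  exfalso. assert (Hd := H1 u w Hu Hw E).
  assert (A1 := coord_close _ _ Hx). assert (A2 := coord_close _ _ Hy).
  replace (fst u - fst v - (fst w - fst v)) with (fst u - fst w) in A1 by ring.
  replace (snd u - snd v - (snd w - snd v)) with (snd u - snd w) in A2 by ring.
  assert (Hs := s_sq). assert (Hq := edist_sq u w).
  assert (rho1 * rho1 <= edist u w * edist u w) by nra. nra.
Qed.

Lemma Ip_mono a b : a <= b -> (Int_part a <= Int_part b)%Z.
Proof.
  intros H. destruct (base_Int_part a) as [a1 a2]. destruct (base_Int_part b) as [b1 b2].
  assert (IZR (Int_part a) < IZR (Int_part b + 1)) by (rewrite plus_IZR; simpl; lra).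
  apply lt_IZR in H0. lia.
Qed.

Lemma Ip_range x y : - y <= x <= y ->
  (- Int_part (y + / 2) <= Int_part (x + / 2) <= Int_part (y + / 2))%Z.
Proof.
  intros [Hl Hr]. split; [|apply Ip_mono; lra].
  destruct (base_Int_part (x + /2)) as [a1 a2]. destruct (base_Int_part (y + /2)) as [b1 b2].
  assert (IZR (- Int_part (y + / 2) - 1) < IZR (Int_part (x + / 2))).
  { rewrite minus_IZR, opp_IZR. simpl. lra. }
  apply lt_IZR in H. lia.
Qed.

Lemma coord_range (a t : R) : a * a <= t * t -> 0 <= t ->
  (- Int_part (t / s + / 2) <= Int_part (a / s + / 2) <= Int_part (t / s + / 2))%Z.
Proof.
  intros H Ht. apply Ip_range. assert (Hs := s_pos).
  assert (-t <= a <= t) by nra. assert (0 < / s) by (apply Rinv_0_lt_compat; auto).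
  unfold Rdiv. split; nra.
Qed.

Lemma center_empty u : In u Vs -> cell u <> (0%Z, 0%Z).
Proof.
  intros Hu Hc. unfold cell in Hc. injection Hc as Hx Hy.
  unfold cx, cy in *. assert (Hs := s_pos). assert (Hss := s_sq).
  destruct (base_Int_part ((fst u - fst v) / s + / 2)) as [a1 a2].
  destruct (base_Int_part ((snd u - snd v) / s + / 2)) as [b1 b2].
  rewrite Hx in a1, a2. rewrite Hy in b1, b2. simpl in *.
  set (p := (fst u - fst v) / s) in *. set (q := (snd u - snd v) / s) in *.
  assert (ep : fst u - fst v = p * s) by (unfold p; field; lra).
  assert (eq : snd u - snd v = q * s) by (unfold q; field; lra).
  assert (Hd := H2 u Hu). assert (Hq := edist_sq u v).
  rewrite ep, eq in Hq.
  assert (p * p <= / 4) by nra. assert (q * q <= / 4) by nra.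
  assert (rho2 * rho2 <= edist u v * edist u v) by nra.
  assert (p ^ 2 * (s * s) <= /4 * (s * s)) by (apply Rmult_le_compat_r; nra).
  assert (q ^ 2 * (s * s) <= /4 * (s * s)) by (apply Rmult_le_compat_r; nra).
  assert (rho1 / 2 * (rho1 / 2) < rho2 * rho2) by nra.
  nra.
Qed.

Lemma geo_count t : rho2 <= t ->
  INR (length (filter (fun u => if Rle_dec (edist u v) t then true else false) Vs))
    <= 18 * t ^ 2 / rho1 ^ 2 + 9 / 2.
Proof.
  intros Ht. assert (Hs := s_pos). assert (Hss := s_sq).
  set (W := filter (fun u => if Rle_dec (edist u v) t then true else false) Vs).
  assert (HW : forall u, In u W <-> In u Vs /\ edist u v <= t).
  { intros u. unfold W. rewrite filter_In. destruct (Rle_dec (edist u v) t); intuition congruence. }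
  set (mz := Int_part (t / s + / 2)).
  assert (Hmz : (0 <= mz)%Z).
  { assert (0 <= t / s) by (unfold Rdiv; apply Rmult_le_pos; [lra| left; apply Rinv_0_lt_compat; auto]).
    destruct (base_Int_part (t / s + / 2)) as [b1 b2]. fold mz in b1, b2.
    assert (IZR (-1) < IZR mz) by (simpl; lra). apply lt_IZR in H0. lia. }
  set (m := Z.to_nat mz).
  assert (HmZ : Z.of_nat m = mz) by (unfold m; rewrite Z2Nat.id; lia).
  assert (Hlen : (S (length W) <= (2 * m + 1) * (2 * m + 1))%nat).
  { rewrite <- (rng_len m), <- length_prod.
    replace (S (length W)) with (length ((0%Z, 0%Z) :: map cell W)) by (simpl; rewrite length_map; reflexivity).
    apply NoDup_incl_length.
    - constructor.
      + intros Hin. apply in_map_iff in Hin. destruct Hin as [u [Hu HuW]].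
        apply HW in HuW. apply (center_empty u); tauto.
      + apply NoDup_map_inj. apply NoDup_filter; auto.
        intros x y Hx Hy. apply HW in Hx, Hy. apply cell_inj; tauto.
    - intros [i j] Hin. apply in_prod_iff.
      destruct Hin as [Hin|Hin].
      + injection Hin as <- <-. split; apply rng_in; lia.
      + apply in_map_iff in Hin. destruct Hin as [u [Hu HuW]]. apply HW in HuW.
        destruct HuW as [HuV Hut]. unfold cell in Hu. injection Hu as <- <-.
        assert (Hq := edist_sq u v). assert (He := edist_nonneg u v).
        assert (Htt : edist u v * edist u v <= t * t) by nra.
        assert (0 <= t) by lra.
        split; apply rng_in; rewrite HmZ; unfold cx, cy, mz; apply coord_range; auto;
          assert (Hp1 := pow2_ge_0 (fst u - fst v)); assert (Hp2 := pow2_ge_0 (snd u - snd v)); simpl in Hq, Hp1, Hp2; lra. }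
  assert (HM : INR m <= t / s + / 2).
  { rewrite INR_IZR_INZ, HmZ. unfold mz. apply base_Int_part. }
  assert (HL : INR (length W) + 1 <= (2 * INR m + 1) * (2 * INR m + 1)).
  { rewrite <- S_INR. replace (2 * INR m + 1) with (INR (2 * m + 1)) by (rewrite plus_INR, mult_INR; simpl; ring).
    rewrite <- mult_INR. apply le_INR; auto. }
  set (x := t / s) in *.
  assert (Htx : t = x * s) by (unfold x; field; lra).
  assert (Hr : 18 * t ^ 2 / rho1 ^ 2 = 9 * (x * x)).
  { rewrite Htx. replace ((x * s) ^ 2) with (x * x * (s * s)) by ring. rewrite Hss. field. lra. }
  rewrite Hr.
  assert (Hx2 : / 2 < x * x).
  { assert (rho1 / 2 * (rho1 / 2) < t * t) by nra.
    rewrite Htx in H. replace (x * s * (x * s)) with (x * x * (s * s)) in H by ring. rewrite Hss in H.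
    assert (0 < rho1 * rho1) by nra.
    apply (Rmult_lt_reg_r (rho1 * rho1 / 2)). lra. nra. }
  destruct m as [|[|m']].
  - simpl in HL. nra.
  - simpl in HL. nra.
  - assert (2 <= INR (S (S m'))) by (rewrite !S_INR; assert (H := pos_INR m'); lra).
    nra.
Qed.
End Geo.
Lemma filter_len_mono {A} (l : list A) (p q : A -> bool) :
  (forall x, In x l -> p x = true -> q x = true) -> (length (filter p l) <= length (filter q l))%nat.
Proof.
  induction l as [|h t IH]; intros H; simpl; auto.
  destruct (p h) eqn:E1.
  - rewrite (H h (or_introl eq_refl) E1). simpl. apply le_n_S, IH. intros; apply H; simpl; auto.
  - destruct (q h); simpl; [apply le_S|]; apply IH; intros; apply H; simpl; auto.
Qed.

Lemma cntle_map {A} (f : A -> R) t l :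
  cntle t (map f l) = length (filter (fun u => if Rle_dec (f u) t then true else false) l).
Proof. induction l; simpl; auto. rewrite cntle_cons, IHl. destruct (Rle_dec (f a) t); reflexivity. Qed.

Lemma ln_nonneg x : 1 <= x -> 0 <= ln x.
Proof. intros H. destruct (Req_dec x 1). subst; rewrite ln_1; lra. rewrite <- ln_1. left; apply ln_increasing; lra. Qed.

Theorem mainTheorem1 (alpha P N rho1 rho2 : R) (Vs : list point) (v : point)
  (Halpha : 2 < alpha) (HP : 0 < P) (HN : 0 <= N)
  (Hnodup : NoDup Vs) (Hv : ~ In v Vs)
  (H1 : forall u w, In u Vs -> In w Vs -> u <> w -> rho1 <= edist u w)
  (H2 : forall u, In u Vs -> rho2 <= edist u v)
  (H3a : rho1 / 2 < rho2) (H3b : 0 < rho1 / 2) :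
  sensedPower P alpha N Vs v <
    36 * (alpha - 1) / (alpha - 2) * (rho2 ^ 2 / rho1 ^ 2)
      * (P / Rpower rho2 alpha) + N.
Proof.
  set (r := rho2) in *.
  assert (Hr : 0 < r) by lra.
  set (L := fun u => ln (edist u v / r)).
  set (K := P / Rpower r alpha).
  assert (HK : 0 < K) by (unfold K, Rpower; apply Rdiv_lt_0_compat; [lra|apply exp_pos]).
  assert (Hsum : fold_right (fun u acc => P / Rpower (edist u v) alpha + acc) 0 Vs
                 = K * sumexp alpha (map L Vs)).
  { assert (Hd : forall u, In u Vs -> 0 < edist u v) by (intros u Hu; specialize (H2 u Hu); lra).
    clear -Hd Hr. induction Vs as [|h t IH]; simpl; [ring|].
    rewrite IH by (intros; apply Hd; simpl; auto).
    unfold sumexp. simpl. fold (sumexp alpha (map L t)).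
    assert (Hh := Hd h (or_introl eq_refl)).
    assert (exp (- alpha * L h) = Rpower r alpha / Rpower (edist h v) alpha).
    { unfold L, Rpower. unfold Rdiv. rewrite ln_mult, ln_Rinv by (try apply Rinv_0_lt_compat; lra).
      assert (0 < exp (alpha * ln (edist h v))) by apply exp_pos.
      apply (Rmult_eq_reg_r (exp (alpha * ln (edist h v)))); [|lra].
      unfold Rdiv. rewrite Rmult_assoc, Rinv_l by lra. rewrite Rmult_1_r, <- exp_plus. f_equal. ring. }
    rewrite H. unfold K. unfold Rpower. field. split; apply Rgt_not_eq, exp_pos. }
  set (a := 18 * r ^ 2 / rho1 ^ 2).
  assert (Ha : 0 <= a) by (unfold a; apply Rmult_le_pos; [nra| left; apply Rinv_0_lt_compat; nra]).
  assert (Hab : sumexp alpha (map L Vs) <= a * alpha / (alpha - 2) + 9 / 2).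
  { apply abel; auto; try lra.
    - intros x Hx. apply in_map_iff in Hx. destruct Hx as [u [<- Hu]]. unfold L. apply ln_nonneg.
      specialize (H2 u Hu). apply (Rmult_le_reg_r r); auto. unfold Rdiv. rewrite Rmult_assoc, Rinv_l; lra.
    - intros t Ht. rewrite cntle_map.
      set (T := r * exp t).
      assert (HT : r <= T).
      { unfold T. assert (1 <= exp t) by (assert (H := exp_ineq1_le t); lra). nra. }
      eapply Rle_trans.
      + apply le_INR. apply (filter_len_mono _ _ (fun u => if Rle_dec (edist u v) T then true else false)).
        intros u Hu. destruct (Rle_dec (L u) t) as [Hl|]; [|discriminate]. intros _.
        destruct (Rle_dec (edist u v) T) as [|Hn]; auto. exfalso. apply Hn.
        assert (Hdu : 0 < edist u v) by (specialize (H2 u Hu); lra).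
        assert (exp (L u) <= exp t).
        { destruct (Req_dec (L u) t) as [E|E]. rewrite E; lra. left; apply exp_increasing; lra. }
        unfold L in H. rewrite exp_ln in H by (apply Rdiv_lt_0_compat; lra).
        unfold T. apply (Rmult_le_reg_r (/ r)). apply Rinv_0_lt_compat; auto.
        replace (r * exp t * / r) with (exp t) by (field; lra). exact H.
      + eapply Rle_trans. apply (geo_count rho1 rho2 Vs v); auto.
        unfold a, T. replace (exp (2 * t)) with (exp t * exp t) by (rewrite <- exp_plus; f_equal; ring).
        right. field. lra. }
  unfold sensedPower. rewrite Hsum. fold K.
  assert (Hq : / 4 < r ^ 2 / rho1 ^ 2).
  { apply (Rmult_lt_reg_r (rho1 ^ 2)). nra. unfold Rdiv. rewrite Rmult_assoc, Rinv_l by nra. nra. }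
  assert (E : 36 * (alpha - 1) / (alpha - 2) * (r ^ 2 / rho1 ^ 2) - (a * alpha / (alpha - 2) + 9 / 2)
              = 18 * (r ^ 2 / rho1 ^ 2) - 9 / 2).
  { unfold a. field. split; nra. }
  assert (K * sumexp alpha (map L Vs) <= K * (a * alpha / (alpha - 2) + 9 / 2)) by (apply Rmult_le_compat_l; lra).
  assert (K * (a * alpha / (alpha - 2) + 9 / 2) < K * (36 * (alpha - 1) / (alpha - 2) * (r ^ 2 / rho1 ^ 2))).
  { apply Rmult_lt_compat_l; auto. lra. }
  lra.
Qed.
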